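(* Assume $\ker(K)\cap\ker(D)=\{0\}$ and let $\Psi$ be a reconstructor. Let $\{\delta_k\}_{k\in\mathbb{N}}$ be a sequence of noise levels with $\delta_k\to0$ as $k\to\infty$, and for each $k$ let $y^{\delta_k}=Kx^{GT}+e_k$ with $\|e_k\|_2\le\delta_k$. For each $k$ let $x^*_{\Psi,\delta_k}$ be the unique minimizer over $\mathcal{X}$ of $\mathcal{J}_{\Psi,\delta_k}(x)=\|Kx-y^{\delta_k}\|_2^2+\lambda\|w(\Psi(y^{\delta_k}))\odot|Dx|\|_1$. Then the sequence $\{x^*_{\Psi,\delta_k}\}_{k\in\mathbb{N}}$ is bounded.
   Context: Let $K\in\mathbb{R}^{m\times n}$ with $m\le n$, and let $D_h,D_v\in\mathbb{R}^{n\times n}$ be the discrete horizontal and vertical difference operators; $Dx=\begin{bmatrix}D_hx\\ D_vx\end{bmatrix}\in\mathbb{R}^{2n}$, and $|Dx|\in\mathbb{R}^n$, $(|Dx|)_i=\sqrt{(D_hx)_i^2+(D_vx)_i^2}$. $\mathcal{X}=\{x\in\mathbb{R}^n: x_i\ge 0\ \forall i\}$; $x^{GT}\in\mathcal{X}$ is fixed. Fix $\lambda>0$, $\eta>0$, $p\in(0,1)$, and for $\tilde x\in\mathbb{R}^n$ define $(w(\tilde{x}))_i=\big(\eta/\sqrt{\eta^2+(|D\tilde{x}|)_i^2}\big)^{1-p}$. A reconstructor is a Lipschitz continuous map $\Psi:\mathbb{R}^m\to\mathbb{R}^n$. $\odot$ is the entrywise product. *)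

(* Defs.v *)
From HB Require Import structures.
From mathcomp Require Import all_boot all_order all_algebra.
From mathcomp Require Import all_classical all_reals all_analysis.
Set Implicit Arguments. Unset Strict Implicit. Unset Printing Implicit Defensive.
Import Order.TTheory GRing.Theory Num.Theory.
Import numFieldNormedType.Exports.
Local Open Scope ring_scope.

Definition norm2 (R : realType) (k : nat) (v : 'cV[R]_k) : R :=
  Num.sqrt (\sum_(i < k) (v i 0) ^+ 2).

Definition norm1 (R : realType) (k : nat) (v : 'cV[R]_k) : R :=
  \sum_(i < k) `|v i 0|.

Definition Dop (R : realType) (n : nat) (Dh Dv : 'M[R]_n) : 'M[R]_(n + n, n) :=
  col_mx Dh Dv.

Definition absD (R : realType) (n : nat) (Dh Dv : 'M[R]_n) (x : 'cV[R]_n)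
  : 'cV[R]_n :=
  \col_i Num.sqrt (((Dh *m x) i 0) ^+ 2 + ((Dv *m x) i 0) ^+ 2).

Definition weight (R : realType) (n : nat) (Dh Dv : 'M[R]_n) (eta p : R)
  (xt : 'cV[R]_n) : 'cV[R]_n :=
  \col_i powR (eta / Num.sqrt (eta ^+ 2 + (absD Dh Dv xt i 0) ^+ 2)) (1 - p).

Definition in_X (R : realType) (n : nat) (x : 'cV[R]_n) : Prop :=
  forall i, 0 <= x i 0.

Definition hadamard (R : realType) (n : nat) (u v : 'cV[R]_n) : 'cV[R]_n :=
  \col_i (u i 0 * v i 0).

Definition Jfun (R : realType) (m n : nat) (K : 'M[R]_(m, n)) (Dh Dv : 'M[R]_n)
  (lambda eta p : R) (Psi : 'cV[R]_m -> 'cV[R]_n) (y : 'cV[R]_m) (x : 'cV[R]_n) : R :=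
  (norm2 (K *m x - y)) ^+ 2
  + lambda * norm1 (hadamard (weight Dh Dv eta p (Psi y)) (absD Dh Dv x)).

Definition lipschitz_map (R : realType) (m n : nat) (Psi : 'cV[R]_m -> 'cV[R]_n) : Prop :=
  exists L : R, forall y1 y2, norm2 (Psi y1 - Psi y2) <= L * norm2 (y1 - y2).

(* Main.v *)
Require Import Defs.
From HB Require Import structures.
From mathcomp Require Import all_boot all_order all_algebra.
From mathcomp Require Import all_classical all_reals all_analysis.
From mathcomp Require Import ring lra.
Import Order.TTheory GRing.Theory Num.Theory.
Import numFieldNormedType.Exports.
Local Open Scope classical_set_scope.
Local Open Scope ring_scope.
Lemma delta_bnd (R : realType) (delta : nat -> R) :
  delta @ \oo --> (0 : R) -> exists M, forall k, `|delta k| <= M.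
Proof.
move=> Hd.
have := cvg_seq_bounded (cvgP _ Hd); case/(@ex_bound _ _ _ _ _ (globally_properfilter (a:=0%N) I)) => M HM.
by exists M => k; apply: HM.
Qed.
Lemma norm2_ge0 (R : realType) k (v : 'cV[R]_k) : 0 <= norm2 v.
Proof. exact: sqrtr_ge0. Qed.
Lemma norm2_sqr (R : realType) k (v : 'cV[R]_k) :
  norm2 v ^+ 2 = \sum_(i < k) (v i 0) ^+ 2.
Proof. by rewrite /norm2 sqr_sqrtr // sumr_ge0 // => i _; rewrite sqr_ge0. Qed.
Lemma entry_le_norm2 (R : realType) k (v : 'cV[R]_k) i : `|v i 0| <= norm2 v.
Proof.
rewrite -sqrtr_sqr /norm2 ler_wsqrtr // (bigD1 i) //= lerDl.
by rewrite sumr_ge0 // => j _; rewrite sqr_ge0.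
Qed.
Lemma norm2_le (R : realType) k (v : 'cV[R]_k) M :
  (forall i, `|v i 0| <= M) -> norm2 v <= Num.sqrt (k%:R * M ^+ 2).
Proof.
move=> H; rewrite /norm2 ler_wsqrtr //.
have -> : k%:R * M ^+ 2 = \sum_(i < k) M ^+ 2 by rewrite sumr_const card_ord mulr_natl.
apply: ler_sum => i _; rewrite -real_normK ?num_real //.
by rewrite lerXn2r ?nnegrE // (le_trans _ (H i)).
Qed.
Lemma norm2N (R : realType) k (v : 'cV[R]_k) : norm2 (- v) = norm2 v.
Proof. by rewrite /norm2; congr Num.sqrt; apply: eq_bigr => i _; rewrite mxE sqrrN. Qed.
Lemma mul_entry_bnd (R : realType) a b (A : 'M[R]_(a, b)) (x : 'cV[R]_b) M i :
  (forall j, `|x j 0| <= M) -> `|(A *m x) i 0| <= \sum_j `|A i j| * M.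
Proof.
move=> H; rewrite mxE (le_trans (ler_norm_sum _ _ _)) //.
by apply: ler_sum => j _; rewrite normrM ler_wpM2l.
Qed.
Lemma row_le_sum (R : realType) a b (A : 'M[R]_(a, b)) i :
  \sum_j `|A i j| <= \sum_i' \sum_j `|A i' j|.
Proof.
rewrite (bigD1 i) //= lerDl sumr_ge0 // => i' _; exact: sumr_ge0.
Qed.
Lemma le_1sqr (R : realType) (x : R) : x <= 1 + x ^+ 2.
Proof. nra. Qed.
Lemma left_inv (R : realType) a b (A : 'M[R]_(a, b)) :
  (forall x : 'cV[R]_b, A *m x = 0 -> x = 0) ->
  exists B : 'M[R]_(b, a), B *m A = 1%:M.
Proof.
move=> H.
have : row_free A^T.
  rewrite -kermx_eq0; apply/eqP.
  have E := mulmx_ker A^T.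
  have E2 : A *m (kermx A^T)^T = 0 by have := congr1 trmx E; rewrite trmx_mul trmxK trmx0.
  apply/matrixP => i j; rewrite mxE.
  have : col i (kermx A^T)^T = 0 by apply: H; rewrite colE mulmxA E2 mul0mx.
  by move/matrixP => /(_ j 0); rewrite !mxE.
case/row_freeP => B HB; exists B^T.
by have := congr1 trmx HB; rewrite trmx_mul trmxK trmx1.
Qed.

Lemma weight_bnd (R : realType) (eta p s A : R) :
  0 < eta -> 0 < p -> p < 1 -> 0 <= s -> s <= A ->
  eta / Num.sqrt (eta ^+ 2 + A) <= powR (eta / Num.sqrt (eta ^+ 2 + s)) (1 - p)
  /\ powR (eta / Num.sqrt (eta ^+ 2 + s)) (1 - p) <= 1.
Proof.
move=> he hp hp1 hs hsA.
have hsq : eta <= Num.sqrt (eta ^+ 2 + s).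
  by rewrite -{1}(ger0_norm (ltW he)) -sqrtr_sqr ler_wsqrtr // lerDl.
have hsq0 : 0 < Num.sqrt (eta ^+ 2 + s) by apply: lt_le_trans hsq.
have hb0 : 0 < eta / Num.sqrt (eta ^+ 2 + s) by rewrite divr_gt0.
have hb1 : eta / Num.sqrt (eta ^+ 2 + s) <= 1 by rewrite ler_pdivrMr // mul1r.
have hb : 0 < eta / Num.sqrt (eta ^+ 2 + s) <= 1 by rewrite hb0 hb1.
split.
  have h1 : eta / Num.sqrt (eta ^+ 2 + s) <= powR (eta / Num.sqrt (eta ^+ 2 + s)) (1 - p).
    by apply: ger1_powR => //; lra.
  apply: le_trans h1.
  rewrite ler_pM2l // lef_pV2 ?posrE //.
    by rewrite ler_wsqrtr // lerD2l.
  by apply: lt_le_trans (ler_wsqrtr _ ); [exact: hsq0| rewrite lerD2l].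
have := @ger_powR R _ hb 0 (1 - p).
rewrite powRr0; apply; rewrite subr_ge0; exact: ltW.
Qed.

Lemma sq_le (R : realType) (x c : R) : `|x| <= c -> x ^+ 2 <= c ^+ 2.
Proof.
move=> h; rewrite -real_normK ?num_real //.
by rewrite lerXn2r ?nnegrE // (le_trans _ h).
Qed.

Lemma addE (R : realType) a b (A B : 'M[R]_(a, b)) i j : (A + B) i j = A i j + B i j.
Proof. by rewrite mxE. Qed.

Arguments delta_bnd {R delta}.
Arguments norm2_ge0 {R k} v.
Arguments norm2_sqr {R k} v.
Arguments entry_le_norm2 {R k} v i.
Arguments norm2_le {R k v M}.
Arguments norm2N {R k} v.
Arguments mul_entry_bnd {R a b A x M i}.
Arguments row_le_sum {R a b} A i.
Arguments le_1sqr {R} x.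
Arguments left_inv {R a b A}.
Arguments weight_bnd {R eta p s A}.
Arguments sq_le {R x c}.
Arguments addE {R a b} A B i j.

Theorem lemma8 (R : realType) (m n : nat) (K : 'M[R]_(m, n)) (Dh Dv : 'M[R]_n)
  (xGT : 'cV[R]_n) (lambda eta p : R)
  (Psi : 'cV[R]_m -> 'cV[R]_n)
  (delta : nat -> R) (e : nat -> 'cV[R]_m) (xs : nat -> 'cV[R]_n) :
  (m <= n)%N ->
  in_X xGT ->
  0 < lambda -> 0 < eta -> 0 < p -> p < 1 ->
  (forall x : 'cV[R]_n, K *m x = 0 -> Dop Dh Dv *m x = 0 -> x = 0) ->
  lipschitz_map Psi ->
  delta @ \oo --> (0 : R) ->
  (forall k, norm2 (e k) <= delta k) ->
  (forall k, in_X (xs k) /\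
     (forall z, in_X z ->
        Jfun K Dh Dv lambda eta p Psi (K *m xGT + e k) (xs k)
        <= Jfun K Dh Dv lambda eta p Psi (K *m xGT + e k) z) /\
     (forall z, in_X z ->
        (forall z', in_X z' ->
           Jfun K Dh Dv lambda eta p Psi (K *m xGT + e k) z
           <= Jfun K Dh Dv lambda eta p Psi (K *m xGT + e k) z') ->
        z = xs k)) ->
  exists C : R, forall k, norm2 (xs k) <= C.
Proof.
move=> _ hGT hl he hp hp1 hker [L HL] hd he_le hmin.
have [Dl HDl] := delta_bnd hd.
have hek : forall k, norm2 (e k) <= Dl.
  by move=> k; apply: le_trans (he_le k) (le_trans (ler_norm _) (HDl k)).
have hDl0 : 0 <= Dl := le_trans (norm2_ge0 _) (hek 0%N).
have hek_ent : forall k j, `|e k j 0| <= Dl.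
  by move=> k j; apply: le_trans (entry_le_norm2 _ j) (hek k).
pose Ne := Num.sqrt (m%:R * (Dl + Dl) ^+ 2).
have hdiff : forall k, norm2 ((K *m xGT + e k) - (K *m xGT + e 0%N)) <= Ne.
  move=> k; apply: norm2_le => j.
  rewrite !mxE.
  have -> : forall a b c : R, (a + b) - (a + c) = b - c by move=> a b c; ring.
  by apply: le_trans (ler_normB _ _) _; rewrite lerD.
pose P := fun k => Psi (K *m xGT + e k).
pose MP := `|L| * Ne + norm2 (P 0%N).
have hMP0 : 0 <= MP by rewrite addr_ge0 ?norm2_ge0 // mulr_ge0 // sqrtr_ge0.
have hP : forall k i, `|P k i 0| <= MP.
  move=> k i.
  have h2 : norm2 (P k - P 0%N) <= `|L| * Ne.
    apply: le_trans (HL _ _) _.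
    apply: le_trans (ler_wpM2r (norm2_ge0 _) (ler_norm L)) _.
    by apply: ler_wpM2l (hdiff k).
  have h3 := entry_le_norm2 (P k - P 0%N) i.
  rewrite !mxE in h3.
  rewrite -[P k i 0](subrK (P 0%N i 0)).
  apply: le_trans (ler_normD _ _) _.
  by rewrite lerD // ?(le_trans h3 h2) // entry_le_norm2.
pose SDh := \sum_i \sum_j `|Dh i j|.
pose SDv := \sum_i \sum_j `|Dv i j|.
pose AA := (SDh * MP) ^+ 2 + (SDv * MP) ^+ 2.
have hMb : forall (M : 'M[R]_n) (x : 'cV[R]_n) i,
    (forall j, `|x j 0| <= MP) ->
    `|(M *m x) i 0| <= (\sum_i' \sum_j `|M i' j|) * MP.
  move=> M x i hx; apply: le_trans (mul_entry_bnd hx) _.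
  by rewrite -mulr_suml ler_wpM2r // row_le_sum.
have hAbs : forall k i, (absD Dh Dv (P k) i 0) ^+ 2 <= AA.
  move=> k i; rewrite /absD mxE sqr_sqrtr ?addr_ge0 ?sqr_ge0 //.
  by rewrite lerD // sq_le // hMb.
pose b0 := eta / Num.sqrt (eta ^+ 2 + AA).
have hAA0 : 0 <= AA by rewrite addr_ge0 ?sqr_ge0.
have hb0 : 0 < b0.
  rewrite divr_gt0 // sqrtr_gt0 ltr_wpDr // exprn_gt0 //.
have hw : forall k i, b0 <= weight Dh Dv eta p (P k) i 0 /\
                      weight Dh Dv eta p (P k) i 0 <= 1.
  by move=> k i; rewrite /weight mxE; apply: weight_bnd; rewrite ?sqr_ge0 //; exact: hAbs.
pose C1 := Dl ^+ 2 + lambda * \sum_i absD Dh Dv xGT i 0.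
have habs0 : forall x i, 0 <= absD Dh Dv x i 0 by move=> x i; rewrite mxE sqrtr_ge0.
have hJ : forall k, Jfun K Dh Dv lambda eta p Psi (K *m xGT + e k) (xs k) <= C1.
  move=> k; have [_ [hm _]] := hmin k; apply: le_trans (hm _ hGT) _.
  rewrite /Jfun.
  have -> : K *m xGT - (K *m xGT + e k) = - e k by rewrite opprD addrA subrr add0r.
  rewrite norm2N; apply: lerD.
    by rewrite lerXn2r ?nnegrE ?norm2_ge0.
  apply: ler_wpM2l; first exact: ltW.
  rewrite /norm1; apply: ler_sum => i _.
  rewrite mxE normrM (ger0_norm (habs0 _ _)) ler_piMl //.
  have [h1 h2] := hw k i.
  by rewrite ger0_norm // (le_trans (ltW hb0) h1).
have hsplit : forall k,
   norm2 (K *m xs k - (K *m xGT + e k)) ^+ 2 <= C1 /\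
   lambda * norm1 (hadamard (weight Dh Dv eta p (P k)) (absD Dh Dv (xs k))) <= C1.
  move=> k; have := hJ k; rewrite /Jfun => h; split.
    apply: le_trans h; rewrite lerDl; apply: mulr_ge0; first exact: ltW.
    rewrite /norm1; apply: sumr_ge0 => i _.
    exact: normr_ge0.
  by apply: le_trans h; rewrite lerDr sqr_ge0.
pose MK := 1 + C1 + norm2 (K *m xGT) + Dl.
have hK : forall k j, `|(K *m xs k) j 0| <= MK.
  move=> k j.
  set v := K *m xs k - (K *m xGT + e k).
  have hv : `|v j 0| <= 1 + C1.
    apply: le_trans (entry_le_norm2 _ j) _.
    apply: le_trans (le_1sqr _) _.
    by rewrite lerD2l; case: (hsplit k).
  have -> : K *m xs k = v + K *m xGT + e k by rewrite /v -addrA subrK.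
  rewrite (addE (v + K *m xGT)) (addE v).
  apply: le_trans (ler_normD _ _) _; apply: lerD; last exact: hek_ent.
  apply: le_trans (ler_normD _ _) _; apply: lerD; first exact: hv.
  exact: entry_le_norm2.
pose MD := C1 / (lambda * b0).
have hD : forall k i, absD Dh Dv (xs k) i 0 <= MD.
  move=> k i; have [_ h] := hsplit k.
  rewrite /MD ler_pdivlMr; last by rewrite mulr_gt0.
  apply: le_trans h.
  rewrite mulrCA; apply: ler_wpM2l; first exact: ltW.
  rewrite /norm1 (bigD1 i) //=.
  have [h1 _] := hw k i.
  have hterm : absD Dh Dv (xs k) i 0 * b0 <=
      `|hadamard (weight Dh Dv eta p (P k)) (absD Dh Dv (xs k)) i 0|.
    rewrite /hadamard [X in _ <= `|X|]mxE normrM (ger0_norm (habs0 _ _)) (ger0_norm (le_trans (ltW hb0) h1)).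
    by rewrite mulrC; apply: ler_wpM2r => //; exact: habs0.
  apply: le_trans hterm _; rewrite lerDl.
  by apply: sumr_ge0 => *; exact: normr_ge0.
have hDh : forall k i, `|(Dh *m xs k) i 0| <= MD.
  move=> k i; apply: le_trans (hD k i); rewrite /absD [X in _ <= X]mxE -sqrtr_sqr; apply: ler_wsqrtr.
  by rewrite lerDl sqr_ge0.
have hDv : forall k i, `|(Dv *m xs k) i 0| <= MD.
  move=> k i; apply: le_trans (hD k i); rewrite /absD [X in _ <= X]mxE -sqrtr_sqr; apply: ler_wsqrtr.
  by rewrite lerDr sqr_ge0.
pose A := col_mx K (Dop Dh Dv).
have hkerA : forall x : 'cV[R]_n, A *m x = 0 -> x = 0.
  move=> x; rewrite /A mul_col_mx -col_mx0 => /eq_col_mx [h1 h2]; exact: hker h1 h2.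
have [B HB] := left_inv hkerA.
pose MA := `|MK| + `|MD|.
have hAx : forall k j, `|(A *m xs k) j 0| <= MA.
  move=> k j; rewrite /A /Dop !mul_col_mx.
  case: (split_ordP j) => j' ->; rewrite ?col_mxEu ?col_mxEd.
    by apply: le_trans (hK k j') _; rewrite (le_trans (ler_norm _)) // lerDl normr_ge0.
  case: (split_ordP j') => j'' ->; rewrite ?col_mxEu ?col_mxEd.
    by apply: le_trans (hDh k j'') _; rewrite (le_trans (ler_norm _)) // lerDr normr_ge0.
  by apply: le_trans (hDv k j'') _; rewrite (le_trans (ler_norm _)) // lerDr normr_ge0.
pose SB := \sum_i \sum_j `|B i j|.
exists (Num.sqrt (n%:R * (SB * MA) ^+ 2)) => k.
apply: norm2_le => i.
have -> : xs k = B *m (A *m xs k) by rewrite mulmxA HB mul1mx.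
apply: le_trans (mul_entry_bnd (hAx k)) _.
by rewrite -mulr_suml ler_wpM2r ?row_le_sum // addr_ge0.
Qed.
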